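(* Let $A,B$ be Hermitian operators on $\mathbb{C}^N$ that each have exactly $N'$ distinct eigenvalues. If the KD distribution of $(A,B)$ distinguishes all states (i.e. $\rho\mapsto K^{A,B}_\rho$ is injective on density operators on $\mathbb{C}^N$), then $N'\ge\frac12\left(\sqrt{2N^2-1}+1\right)$.
   Context: A density operator is a positive semidefinite trace-one operator. Kirkwood–Dirac (KD) distribution: for Hermitian operators $A_1,\dots,A_n$ on $\mathbb{C}^N$ and a density operator $\rho$, define $\#^{K}_{A_1,\dots,A_n}(x)=(2\pi)^{-n}\int_{\mathbb{R}^n} e^{-is_1A_1}\cdots e^{-is_nA_n}\,e^{i s\cdot x}\,d^ns$ (inverse Fourier transform in the distributional sense), and $K^{A_1,\dots,A_n}_\rho(x)=\mathrm{Tr}[\#^{K}_{A_1,\dots,A_n}(x)\,\rho]$. *)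

(* Defs.v *)
From HB Require Import structures.
From mathcomp Require Import all_boot all_order all_algebra.
From mathcomp Require Import complex.
From mathcomp Require Import reals.
From Stdlib Require Import ClassicalEpsilon.

Set Implicit Arguments.
Unset Strict Implicit.
Unset Printing Implicit Defensive.

Import Order.TTheory GRing.Theory Num.Theory.
Local Open Scope ring_scope.
Local Open Scope sesquilinear_scope.

Section KD.
Variable R : realType.
Local Notation C := (R[i]).

Definition adjmx m n (M : 'M[C]_(m, n)) : 'M[C]_(n, m) := M ^t*.

Definition density_operator (N : nat) (rho : 'M[C]_N) : Prop :=
  rho \is hermsymmx /\
  (forall v : 'cV[C]_N, 0 <= (adjmx v *m rho *m v) ord0 ord0) /\
  \tr rho = 1.

(* P is the spectral projector of A at a: the orthogonal projector onto the
   eigenspace ker (A - a).  (P = 0 when a is not an eigenvalue.) *)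
Definition is_spec_proj (N : nat) (A : 'M[C]_N) (a : C) (P : 'M[C]_N) : Prop :=
  [/\ P *m P = P, P \is hermsymmx, A *m P = a *: P &
      forall v : 'cV[C]_N, A *m v = a *: v -> P *m v = v].

Definition specproj (N : nat) (A : 'M[C]_N) (a : C) : 'M[C]_N :=
  epsilon (inhabits 0) (is_spec_proj A a).

(* For Hermitian A, B with
   spectral decompositions A = sum_j a_j P_j, B = sum_k b_k Q_k, the inverse
   Fourier transform of s |-> e^{-i s1 A} e^{-i s2 B} is the finite sum of
   point masses sum_{j,k} delta_{(a_j,b_k)} P_j Q_k, so K^{A,B}_rho is the
   atomic (complex) measure on R^2 whose mass at the point (x,y) is
   Tr[P_A(x) P_B(y) rho]; we represent it by this mass function. *)
Definition KD (N : nat) (A B rho : 'M[C]_N) (x y : R) : C :=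
  \tr (specproj A (Complex x 0) *m specproj B (Complex y 0) *m rho).

Definition KD_distinguishes_states (N : nat) (A B : 'M[C]_N) : Prop :=
  forall rho1 rho2 : 'M[C]_N, density_operator rho1 -> density_operator rho2 ->
    KD A B rho1 = KD A B rho2 -> rho1 = rho2.

Definition num_distinct_eigenvalues (N : nat) (A : 'M[C]_N) (n : nat) : Prop :=
  exists s : seq C, [/\ uniq s, size s = n & forall a, eigenvalue A a = (a \in s)].

End KD.

(* Main.v *)
Set Warnings "-notation-overridden,-ambiguous-paths,-notation-incompatible-prefix".
Require Import Defs.
From HB Require Import structures.
From mathcomp Require Import all_boot all_order all_algebra.
From mathcomp Require Import complex reals.
From Stdlib Require Import ClassicalEpsilon.
From mathcomp Require Import ring lra.
Set Implicit Arguments.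
Unset Strict Implicit.
Unset Printing Implicit Defensive.
Import Order.TTheory GRing.Theory Num.Theory.
Local Open Scope ring_scope.
Local Open Scope sesquilinear_scope.

Section S.
Variable R : realType.
Local Notation C := (R[i]).

Lemma unitary_tK N (U : 'M[C]_N) : U \is unitarymx -> U^t* *m U = 1%:M.
Proof. by move=> Uu; rewrite -(invmx_unitary Uu) mulVmx ?unitarymx_unit. Qed.

Lemma unitary_Kt N (U : 'M[C]_N) : U \is unitarymx -> U *m U^t* = 1%:M.
Proof. by move/unitarymxP. Qed.

Lemma hermP N (M : 'M[C]_N) : M \is hermsymmx <-> M^t* = M.
Proof.
split=> [/is_hermitianmxP|h]; first by rewrite expr0 scale1r => /esym.
by apply/is_hermitianmxP; rewrite expr0 scale1r h.
Qed.

Lemma adjM m n p (A : 'M[C]_(m, n)) (B : 'M[C]_(n, p)) :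
  (A *m B)^t* = B^t* *m A^t*.
Proof. by rewrite trmx_mul map_mxM. Qed.

Definition Ea N (d : 'rV[C]_N) (a : C) : 'M[C]_N :=
  diag_mx (\row_i ((d 0 i == a)%:R)).
Definition Pa N (U : 'M[C]_N) d a := U^t* *m Ea d a *m U.

Lemma Ea_adj N (d : 'rV[C]_N) a : (Ea d a)^t* = Ea d a.
Proof.
apply/matrixP => i j; rewrite !mxE rmorphMn rmorph_nat.
case: (eqVneq i j) => [->|ne]; first by [].
by rewrite !mulr0n.
Qed.

Lemma Ea_idem N (d : 'rV[C]_N) a : Ea d a *m Ea d a = Ea d a.
Proof.
rewrite /Ea mulmx_diag; congr diag_mx; apply/rowP => i; rewrite !mxE.
by case: eqP; rewrite ?mulr1 ?mulr0.
Qed.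

Lemma Pa_spec N (A U : 'M[C]_N) d a : U \is unitarymx ->
  A = U^t* *m diag_mx d *m U -> is_spec_proj A a (Pa U d a).
Proof.
move=> Uu hA; have tK := unitary_tK Uu; have Kt := unitary_Kt Uu.
split.
- rewrite /Pa !mulmxA (mulmxtVK _ Uu).
  rewrite -[U^t* *m _ *m Ea d a]mulmxA Ea_idem; reflexivity.
- apply/hermP; rewrite /Pa !adjM trmxCK Ea_adj mulmxA; reflexivity.
- rewrite hA /Pa !mulmxA (mulmxtVK _ Uu).
  rewrite -[U^t* *m diag_mx d *m Ea d a]mulmxA.
  have -> : diag_mx d *m Ea d a = a *: Ea d a.
    apply/matrixP => i j; rewrite mul_diag_mx !mxE.
    case: (eqVneq i j) => [->|_] /=; rewrite ?mulr0n ?mulr0 ?mulr1n //.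
    by case: eqP => [->|]; rewrite ?mulr1 ?mulr0.
  rewrite -scalemxAr -scalemxAl; reflexivity.
- move=> v hv.
  have hw : diag_mx d *m (U *m v) = a *: (U *m v).
    have := congr1 (mulmx U) hv; rewrite hA !mulmxA Kt mul1mx.
    rewrite -scalemxAr; exact: id.
  have hE : Ea d a *m (U *m v) = U *m v.
    apply/matrixP => i j; have := congr1 (fun M : 'cV[C]_N => M i j) hw.
    rewrite /Ea !mul_diag_mx !mxE; case: eqP => [->|ne]; first by rewrite mul1r.
    move=> /eqP; rewrite -subr_eq0 -mulrBl mulf_eq0 subr_eq0 => /orP[/eqP//|/eqP ->].
    by rewrite mulr0.
  rewrite /Pa -!mulmxA hE mulmxA tK mul1mx; reflexivity.
Qed.
Lemma spec_proj_uniq N (A : 'M[C]_N) a P P' :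
  is_spec_proj A a P -> is_spec_proj A a P' -> P = P'.
Proof.
have key : forall P P', is_spec_proj A a P -> is_spec_proj A a P' -> P' *m P = P.
  move=> {}P {}P' [_ _ hAP _] [_ _ _ h'].
  apply/matrixP => i j.
  have hv : A *m (P *m delta_mx j (ord0 : 'I_1)) = a *: (P *m delta_mx j (ord0 : 'I_1)).
    by rewrite mulmxA hAP -scalemxAl.
  have := congr1 (fun M : 'cV[C]_N => M i 0) (h' _ hv).
  rewrite mulmxA -!colE !mxE; exact: id.
move=> hP hP'; have e1 := key _ _ hP hP'; have e2 := key _ _ hP' hP.
case: hP => _ /hermP hP _ _; case: hP' => _ /hermP hP' _ _.
rewrite -e1 -hP -hP' -adjM e2; reflexivity.
Qed.

Lemma specprojE N (A U : 'M[C]_N) d a : U \is unitarymx ->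
  A = U^t* *m diag_mx d *m U -> specproj A a = Pa U d a.
Proof.
move=> Uu hA; apply: (spec_proj_uniq (A:=A) (a:=a)); last exact: Pa_spec.
rewrite /specproj; apply: epsilon_spec; exists (Pa U d a); exact: Pa_spec.
Qed.

Lemma diag_eigen N (A U : 'M[C]_N) d i : U \is unitarymx ->
  A = U^t* *m diag_mx d *m U -> eigenvalue A (d 0 i).
Proof.
move=> Uu hA; apply/eigenvalueP; exists (row i U).
  rewrite -row_mul hA !mulmxA (unitary_Kt Uu) mul1mx row_mul.
  rewrite row_diag_mx -scalemxAl -rowE; reflexivity.
apply/eqP => h0; have := congr1 (row i) (unitary_Kt Uu).
rewrite row_mul h0 mul0mx => /rowP /(_ i); rewrite !mxE eqxx /=.
by move/eqP; rewrite eq_sym oner_eq0.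
Qed.
Lemma sum_Ea N (d : 'rV[C]_N) (s : seq C) : uniq s -> (forall i, d 0 i \in s) ->
  \sum_(a <- s) Ea d a = 1%:M.
Proof.
move=> us ds; apply/matrixP => i j; rewrite summxE !mxE.
under eq_bigr do rewrite !mxE.
rewrite sumrMnl (bigD1_seq (d 0 i)) //= eqxx big1 ?addr0 //.
by move=> a /negbTE; rewrite eq_sym => ->.
Qed.

Lemma sum_Pa N (U : 'M[C]_N) (d : 'rV[C]_N) (s : seq C) : U \is unitarymx -> uniq s ->
  (forall i, d 0 i \in s) -> \sum_(a <- s) Pa U d a = 1%:M.
Proof.
move=> Uu us ds; rewrite /Pa -mulmx_suml -mulmx_sumr sum_Ea // mulmx1.
exact: unitary_tK.
Qed.

Lemma Pa_out N (U : 'M[C]_N) (d : 'rV[C]_N) (s : seq C) a :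
  (forall i, d 0 i \in s) -> a \notin s -> Pa U d a = 0.
Proof.
move=> ds ha; rewrite /Pa; have -> : Ea d a = 0.
  apply/matrixP => i j; rewrite !mxE.
  have /negbTE -> : d 0 i != a by apply: contraNneq ha => <-.
  by rewrite mul0rn.
rewrite mulmx0 mul0mx; reflexivity.
Qed.
Definition Pd N (U : 'M[C]_N) (e : 'rV[C]_N) := U^t* *m diag_mx e *m U.

Lemma diag_adj N (e : 'rV[C]_N) : (forall i, e 0 i \is Num.real) ->
  (diag_mx e)^t* = diag_mx e.
Proof.
move=> er; apply/matrixP => i j; rewrite !mxE rmorphMn.
case: (eqVneq i j) => [->|ne] /=; last by rewrite !mulr0n.
by rewrite !mulr1n; apply: conj_Creal.
Qed.

Lemma Pd_density N (U : 'M[C]_N) (e : 'rV[C]_N) : U \is unitarymx ->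
  (forall i, 0 <= e 0 i) -> \sum_i e 0 i = 1 -> density_operator (Pd U e).
Proof.
move=> Uu e0 e1; split; [|split].
- apply/hermP; rewrite /Pd !adjM trmxCK mulmxA diag_adj; first reflexivity.
  by move=> i; apply: ger0_real.
- move=> v; rewrite /adjmx /Pd !mulmxA -(mulmxA _ U v) -adjM.
  move: (U *m v) => w.
  rewrite mul_mx_diag !mxE; apply: sumr_ge0 => k _; rewrite !mxE.
  rewrite mulrAC; apply: mulr_ge0 => //.
  rewrite mulrC; exact: mul_conjC_ge0.
- rewrite /Pd mxtrace_mulC mulmxA (unitary_Kt Uu) mul1mx mxtrace_diag; exact: e1.
Qed.
Lemma herm_decomp N (H : 'M[C]_N) : H \is hermsymmx ->
  H = (spectralmx H)^t* *m diag_mx (spectral_diag H) *m spectralmx H.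
Proof.
move=> hH; rewrite -(invmx_unitary (spectral_unitarymx H)).
by apply/orthomx_spectralP/hermitian_normalmx.
Qed.

Lemma herm_diff N (H : 'M[C]_N) : (0 < N)%N -> H \is hermsymmx -> \tr H = 0 ->
  exists rho1 rho2 c, [/\ density_operator rho1, density_operator rho2,
                         c != 0 & rho1 - rho2 = c *: H].
Proof.
move=> N0 hH tH.
have eH := herm_decomp hH.
move: eH; set U := spectralmx H; set d := spectral_diag H => eH.
have Uu : U \is unitarymx := spectral_unitarymx H.
have dr : forall i, d 0 i \is Num.real.
  move=> i; have /mxOverP h := hermitian_spectral_diag_real hH; exact: h.
have sd : \sum_i d 0 i = 0.
  move: tH; rewrite eH mxtrace_mulC mulmxA (unitary_Kt Uu) mul1mx mxtrace_diag.
  exact: id.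
set S := \sum_i `|d 0 i|.
have S0 : 0 <= S by apply: sumr_ge0 => i _.
have S1 : 0 < 1 + S by apply: ltr_pwDl.
set eps := (1 + S)^-1.
have eps0 : 0 < eps by rewrite invr_gt0.
have N0' : (N%:R : C) != 0 by rewrite pnatr_eq0 -lt0n.
set Ninv := (N%:R : C)^-1.
have Ninv0 : 0 < Ninv by rewrite invr_gt0 ltr0n.
exists (Pd U (\row_i (Ninv * (1 + eps * d 0 i)))), (Pd U (\row_i Ninv)), (Ninv * eps).
split.
- apply: Pd_density => // [i|]; rewrite ?mxE.
    apply: mulr_ge0; first exact: ltW.
    have -> : 1 + eps * d 0 i = eps * ((1 + S) + d 0 i).
      by rewrite mulrDr mulVf ?gt_eqF.
    apply: mulr_ge0; first exact: ltW.
    have hS : `|d 0 i| <= S.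
      by rewrite /S (bigD1 i) //= lerDl; apply: sumr_ge0.
    have h2 : 0 <= `|d 0 i| + d 0 i.
      have r : - d 0 i \is Num.real by rewrite realN.
      have := real_ler_norm r; rewrite normrN -subr_ge0 opprK.
      by rewrite addrC.
    have -> : 1 + S + d 0 i = 1 + (S - `|d 0 i|) + (`|d 0 i| + d 0 i) by ring.
    by apply: addr_ge0 => //; apply: addr_ge0 => //; rewrite subr_ge0.
  under eq_bigr do rewrite mxE.
  rewrite -mulr_sumr big_split /= -mulr_sumr sd mulr0 addr0 sumr_const card_ord.
  by rewrite mulVf.
- apply: Pd_density => // [i|]; rewrite ?mxE; first exact: ltW.
  under eq_bigr do rewrite mxE.
  by rewrite sumr_const card_ord -mulr_natl mulfV.
- by rewrite mulf_neq0 ?gt_eqF.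
- rewrite eH /Pd -mulmxBl -mulmxBr scalemxAl scalemxAr.
  congr (_ *m _ *m _); apply/matrixP => i j; rewrite !mxE.
  case: (eqVneq i j) => [->|ne] /=; last by rewrite !mulr0n subr0 mulr0.
  rewrite !mulr1n; ring.
Qed.
Lemma tr_real N (P H : 'M[C]_N) : P \is hermsymmx -> H \is hermsymmx ->
  complex.Im (\tr (P *m H)) = 0.
Proof.
move=> /hermP hP /hermP hH.
have e : \tr ((P *m H)^t*) = (\tr (P *m H))^* by rewrite trace_map_mx mxtrace_tr.
move: e; rewrite adjM hP hH mxtrace_mulC => /esym /CrealP.
by case: (\tr (P *m H)) => x y; rewrite complex_real => /eqP.
Qed.

Lemma Im_sum I (r : seq I) (F : I -> C) :
  complex.Im (\sum_(i <- r) F i) = \sum_(i <- r) complex.Im (F i).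
Proof.
elim: r => [|x r IH]; first by rewrite !big_nil.
by rewrite !big_cons -IH; case: (F x) => ? ?; case: (\sum_(i <- r) F i).
Qed.

Definition Psi N (X : 'M[R]_N) : 'M[C]_N :=
  \matrix_(i, j) Complex (X i j + X j i) (X i j - X j i).

Lemma Psi_herm N (X : 'M[R]_N) : Psi X \is hermsymmx.
Proof.
apply/hermP; apply/matrixP => i j; rewrite !mxE /=.
apply/eqP; rewrite eq_complex /=; apply/andP; split; apply/eqP; ring.
Qed.

Lemma Psi_lin N k (X Y : 'M[R]_N) :
  Psi (k *: X + Y) = (k%:C)%C *: Psi X + Psi Y.
Proof.
apply/matrixP => i j; rewrite !mxE /=.
apply/eqP; rewrite eq_complex /=; apply/andP; split; apply/eqP; ring.
Qed.

Lemma Psi_inj N (X : 'M[R]_N) : Psi X = 0 -> X = 0.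
Proof.
move=> h; apply/matrixP => i j; have := congr1 (fun M : 'M[C]_N => M i j) h.
rewrite !mxE => -[h1 h2]; lra.
Qed.
End S.

Section Dim.
Variables (R : realType) (N n' : nat) (W : 'I_n'.+1 -> 'I_n'.+1 -> 'M[R[i]]_N).
Local Notation C := (R[i]).

Definition KK (H : 'M[C]_N) a b := \tr (W a b *m H).

Definition wd (a : 'I_n') : 'I_n'.+1 := widen_ord (leqnSn n') a.

Definition G (v : 'rV[R]_(N * N)) : 'rV[R]_(n'.+1 * n'.+1 + n' * n') :=
  row_mx (mxvec (\matrix_(a, b) complex.Re (KK (Psi (vec_mx v)) a b)))
         (mxvec (\matrix_(a, b) complex.Im (KK (Psi (vec_mx v)) (wd a) (wd b)))).

Lemma KK_lin k H H' a b :
  KK ((k%:C)%C *: H + H') a b = (k%:C)%C * KK H a b + KK H' a b.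
Proof. by rewrite /KK mulmxDr -scalemxAr mxtraceD mxtraceZ. Qed.

Lemma G_lin : linear G.
Proof.
move=> k u v; rewrite /G linearP Psi_lin scale_row_mx add_row_mx -!linearP.
congr (row_mx (mxvec _) (mxvec _)); apply/matrixP => a b; rewrite !mxE KK_lin.
  by case: (KK _ _ _) => ? ?; case: (KK _ _ _) => ? ? /=; ring.
by case: (KK _ _ _) => ? ?; case: (KK _ _ _) => ? ? /=; ring.
Qed.

HB.instance Definition _ := GRing.isLinear.Build R 'rV[R]_(N * N)
  'rV[R]_(n'.+1 * n'.+1 + n' * n') *:%R G G_lin.

Lemma Im_sum' I (r : seq I) (F : I -> C) :
  complex.Im (\sum_(i <- r) F i) = \sum_(i <- r) complex.Im (F i).
Proof. exact: Im_sum. Qed.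

Lemma dim_bound :
  (forall H, H \is hermsymmx -> forall a, complex.Im (\sum_b KK H a b) = 0) ->
  (forall H, H \is hermsymmx -> forall b, complex.Im (\sum_a KK H a b) = 0) ->
  (forall H, H \is hermsymmx -> (forall a b, KK H a b = 0) -> H = 0) ->
  (N * N <= n'.+1 * n'.+1 + n' * n')%N.
Proof.
move=> hr hc hinj; rewrite leqNgt; apply/negP => hlt.
set Mx := lin1_mx G.
have hk : kermx Mx != 0.
  rewrite -mxrank_eq0 mxrank_ker subn_eq0 -ltnNge.
  exact: leq_ltn_trans (rank_leq_col Mx) hlt.
have : [exists i, row i (kermx Mx) != 0].
  move: hk; apply: contraNT => /existsPn h.
  apply/eqP/row_matrixP => j; rewrite row0; apply/eqP; have := h j.
  by rewrite negbK.
case/existsP => i hi.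
set v := row i (kermx Mx) in hi.
have hv : G v = 0 by rewrite -mul_rV_lin1 /v -row_mul mulmx_ker row0.
set H := Psi (vec_mx v).
have hH : H \is hermsymmx := Psi_herm (vec_mx v).
have [h1 h2] : (\matrix_(a, b) complex.Re (KK H a b)) = 0 /\
   (\matrix_(a, b) complex.Im (KK H (wd a) (wd b)) : 'M_n') = 0.
  move: hv; rewrite /G -row_mx0 => /eq_row_mx [/eqP e1 /eqP e2].
  move: e1 e2; rewrite !mxvec_eq0 => /eqP e1 /eqP e2; split; [exact: e1 | exact: e2].
have re a b : complex.Re (KK H a b) = 0.
  by move/matrixP: h1 => /(_ a b); rewrite !mxE.
have imw a b : complex.Im (KK H (wd a) (wd b)) = 0.
  by move/matrixP: h2 => /(_ a b); rewrite !mxE.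
have im1 a : complex.Im (KK H (wd a) ord_max) = 0.
  have := hr H hH (wd a); rewrite Im_sum' big_ord_recr /= big1 ?add0r //.
have im2 b : complex.Im (KK H ord_max (wd b)) = 0.
  have := hc H hH (wd b); rewrite Im_sum' big_ord_recr /= big1 ?add0r //.
have im3 : complex.Im (KK H ord_max ord_max) = 0.
  have := hc H hH ord_max; rewrite Im_sum' big_ord_recr /= big1 ?add0r //.
have lw (a : 'I_n') : lift ord_max a = wd a by apply: val_inj; exact: lift_max.
have im a b : complex.Im (KK H a b) = 0.
  case: (unliftP ord_max a) => [a'|] ->; case: (unliftP ord_max b) => [b'|] ->;
    rewrite ?lw //.
have hK a b : KK H a b = 0.
  by move: (re a b) (im a b); case: (KK H a b) => x y /= -> ->.
have := hinj _ hH hK => /Psi_inj /(congr1 mxvec); rewrite vec_mxK linear0 => v0.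
by move: hi; rewrite v0 eqxx.
Qed.
End Dim.
Lemma final_arith (R : realType) (N n' : nat) :
  (N * N <= n'.+1 * n'.+1 + n' * n')%N ->
  (Num.sqrt (2 * (N%:R : R) ^+ 2 - 1) + 1) / 2 <= (n'.+1%:R : R).
Proof.
move=> h.
have hN : (N%:R : R) ^+ 2 <= (n'%:R + 1) ^+ 2 + n'%:R ^+ 2.
  by move: h; rewrite -(ler_nat R) natrD !natrM -!expr2 -[n'.+1]addn1 (natrD _ n' 1).
have m0 : (0 : R) <= n'%:R by rewrite ler0n.
have hs : Num.sqrt (2 * (N%:R : R) ^+ 2 - 1) <= 2 * n'%:R + 1.
  rewrite -[X in _ <= X]ger0_norm; last by lra.
  rewrite -sqrtr_sqr ler_sqrt; last exact: sqr_ge0.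
  nra.
rewrite ler_pdivrMr; last by lra.
rewrite -[n'.+1]addn1 (natrD _ n' 1); lra.
Qed.

From Stdlib Require Import FunctionalExtensionality.

Theorem corollary1 (R : realType) (N N' : nat) (A B : 'M[R[i]]_N) :
  (0 < N)%N ->
  A \is hermsymmx -> B \is hermsymmx ->
  num_distinct_eigenvalues A N' -> num_distinct_eigenvalues B N' ->
  KD_distinguishes_states A B ->
  (Num.sqrt (2 * (N%:R : R) ^+ 2 - 1) + 1) / 2 <= (N'%:R : R).
Proof.
move=> N0 hA hB [sA [usA szA eA]] [sB [usB szB eB]] hKD.
have eqA := herm_decomp hA; have eqB := herm_decomp hB.
move: eqA eqB.
set UA := spectralmx A; set dA := spectral_diag A.
set UB := spectralmx B; set dB := spectral_diag B => eqA eqB.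
have UAu : UA \is unitarymx := spectral_unitarymx A.
have UBu : UB \is unitarymx := spectral_unitarymx B.
have inA i : dA 0 i \in sA by rewrite -eA; exact: diag_eigen UAu eqA.
have inB i : dB 0 i \in sB by rewrite -eB; exact: diag_eigen UBu eqB.
have spA x : specproj A x = Pa UA dA x := specprojE x UAu eqA.
have spB x : specproj B x = Pa UB dB x := specprojE x UBu eqB.
case: N' szA szB => [|n'] szA szB.
  by have := inA (Ordinal N0); rewrite (size0nil szA).
apply: final_arith.
set PA := fun a : 'I_n'.+1 => Pa UA dA (nth 0 sA a).
set PB := fun a : 'I_n'.+1 => Pa UB dB (nth 0 sB a).
have sumA : \sum_(a < n'.+1) PA a = 1%:M.
  by have := sum_Pa UAu usA inA; rewrite (big_nth 0) big_mkord szA.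
have sumB : \sum_(a < n'.+1) PB a = 1%:M.
  by have := sum_Pa UBu usB inB; rewrite (big_nth 0) big_mkord szB.
have hPA a : PA a \is hermsymmx by case: (Pa_spec (nth 0 sA a) UAu eqA).
have hPB a : PB a \is hermsymmx by case: (Pa_spec (nth 0 sB a) UBu eqB).
apply: (dim_bound (W := fun a b => PA a *m PB b)).
- move=> H hH a.
  have -> : \sum_b KK (fun a b => PA a *m PB b) H a b = \tr (PA a *m H).
    by rewrite /KK -linear_sum /= -mulmx_suml -mulmx_sumr sumB mulmx1.
  exact: tr_real.
- move=> H hH b.
  have -> : \sum_a KK (fun a b => PA a *m PB b) H a b = \tr (PB b *m H).
    by rewrite /KK -linear_sum /= -mulmx_suml -[\sum_(a < n'.+1) PA a *m PB b]mulmx_suml sumA mul1mx.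
  exact: tr_real.
move=> H hH hK.
have tH : \tr H = 0.
  have -> : \tr H = \sum_a \sum_b KK (fun a b => PA a *m PB b) H a b.
    rewrite /KK; under eq_bigr do rewrite -linear_sum /= -mulmx_suml -mulmx_sumr sumB mulmx1.
    by rewrite -linear_sum /= -mulmx_suml sumA mul1mx.
  by apply: big1 => a _; apply: big1 => b _; exact: hK.
have [rho1 [rho2 [c [d1 d2 c0 e]]]] := herm_diff N0 hH tH.
have r12 : rho1 = rho2.
  apply: hKD => //; apply: functional_extensionality => x.
  apply: functional_extensionality => y.
  rewrite /KD; apply/eqP; rewrite -subr_eq0 -linearB /= -mulmxBr e -scalemxAr.
  rewrite mxtraceZ mulf_eq0; apply/orP; right; apply/eqP.
  rewrite spA spB.
  case: (boolP (Complex x 0 \in sA)) => hx; last first.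
    by rewrite (Pa_out UA inA hx) !mul0mx mxtrace0.
  case: (boolP (Complex y 0 \in sB)) => hy; last first.
    by rewrite (Pa_out UB inB hy) mulmx0 mul0mx mxtrace0.
  have ia : (index (Complex x 0%R) sA < n'.+1)%N by rewrite -szA index_mem.
  have ib : (index (Complex y 0%R) sB < n'.+1)%N by rewrite -szB index_mem.
  have := hK (Ordinal ia) (Ordinal ib); rewrite /KK /PA /PB /= !nth_index //.
move: e; rewrite r12 subrr => /esym/eqP; rewrite scaler_eq0 (negbTE c0) /=.
by move/eqP.
Qed.
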